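(* Let $mG$ be a finite canonical misinformation game, $\Gamma=(\mathcal{AD}^*(\{mG\}),E)$ its adaptation graph, $\Gamma'$ its loopless version, and let $K=\{mG'\in\mathcal{AD}^*(\{mG\}): d^+_{\Gamma'}(mG')=0\}$ be the set of sink nodes of $\Gamma'$. Then $K\subseteq\mathcal{T}$, where $\mathcal{T}$ is the terminal set of the Adaptation Procedure on $mG$. Moreover, every natural misinformed equilibrium of any $mG'\in K$ is a stable misinformed equilibrium of $mG$.
   Context: A normal-form game is $G=\langle N,S,P\rangle$ with finite players $N$, finite pure strategy sets $S_i$, positions $S=\times_i S_i$, payoffs $P_i:S\to\mathbb{R}$. A misinformation game $mG=\langle G^0,G^1,\dots,G^{|N|}\rangle$ consists of the actual game $G^0$ and subjective games $G^i$; it is canonical if all $G^i=\langle N,S,P^i\rangle$ differ from $G^0$ only in payoffs and in every $G^i$ all players have equally many pure strategies. $NME(mG)$ (natural misinformed equilibria) is the set of profiles $\sigma=(\sigma_1,\dots,\sigma_{|N|})$ such that each $\sigma_i$ is player $i$'s component of some Nash equilibrium of $G^i$. $\chi(\sigma)=\mathrm{supp}(\sigma_1)\times\dots\times\mathrm{supp}(\sigma_{|N|})$. For $\vec v\in S$, $mG_{\vec v}$ is obtained by replacing, in every $P^i$ ($i\ge1$), the payoff vector at position $\vec v$ by $P^0(\vec v)$. For a set $M$ of misinformation games, $\mathcal{AD}(M)=\{mG_{\vec u}: mG\in M,\sigma\in NME(mG),\vec u\in\chi(\sigma)\}$, $\mathcal{AD}^{(0)}(M)=M$, $\mathcal{AD}^{(t+1)}(M)=\mathcal{AD}^{(t)}(\mathcal{AD}(M))$,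 $\mathcal{AD}^*(M)=\bigcup_{t\ge0}\mathcal{AD}^{(t)}(M)$; the length $\mathfrak{L}$ is the least $t\ge0$ with $\mathcal{AD}^{(t+1)}(M)=\mathcal{AD}^{(t)}(M)$ and $\mathcal{AD}^\infty(M)=\mathcal{AD}^{(\mathfrak{L})}(M)$. The terminal set is $\mathcal{T}=\{mG'\in\mathcal{AD}^*(\{mG\}): mG'\in\mathcal{AD}(\{mG'\})\}$. A profile $\sigma$ is a stable misinformed equilibrium of $mG$ if there is $\widehat{mG}\in\mathcal{AD}^\infty(\{mG\})$ with $\sigma\in NME(\widehat{mG})$ and $\widehat{mG}_{\vec v}=\widehat{mG}$ for all $\vec v\in\chi(\sigma)$. The adaptation graph $\Gamma$ has vertex set $\mathcal{AD}^*(\{mG\})$ and an edge $(mG^1,mG^2)$ iff $mG^2=(mG^1)_{\vec v}$ for some $\sigma\in NME(mG^1)$, $\vec v\in\chi(\sigma)$; $\Gamma'$ is $\Gamma$ with self-loops removed; $d^+_{\Gamma'}$ denotes out-degree in $\Gamma'$. *)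

(* Defs.v *)
From HB Require Import structures.
From mathcomp Require Import all_boot all_order all_algebra.
From mathcomp Require Import reals.
Set Implicit Arguments. Unset Strict Implicit. Unset Printing Implicit Defensive.
Import Order.TTheory GRing.Theory Num.Theory.
Local Open Scope ring_scope.

Section MisinformationGames.
Variable R : realType.
Variable n : nat.
Variable S : 'I_n -> finType.

Definition pos := {dffun forall i : 'I_n, S i}.
Definition payoff := {ffun pos -> {ffun 'I_n -> R}}.

(* A canonical misinformation game: actual game G^0 and subjective games
   G^i (i in N), all with the same players and strategy sets. *)
Record mgame := MGame { actual : payoff; subj : {ffun 'I_n -> payoff} }.

Definition mixed (T : finType) (x : {ffun T -> R}) :=
  (forall a, 0 <= x a) /\ \sum_a x a = 1.
Definition profile := forall i : 'I_n, {ffun S i -> R}.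
Definition is_profile (sg : profile) := forall i, mixed (sg i).

Definition EU (P : payoff) (sg : profile) (j : 'I_n) : R :=
  \sum_(s : pos) (\prod_(i : 'I_n) sg i (s i)) * P s j.
Definition EUdev (P : payoff) (sg : profile) (j : 'I_n) (tau : {ffun S j -> R}) : R :=
  \sum_(s : pos) (tau (s j) * \prod_(i : 'I_n | i != j) sg i (s i)) * P s j.

Arguments EUdev P sg j tau : clear implicits.

Definition Nash (P : payoff) (sg : profile) :=
  is_profile sg /\
  forall j (tau : {ffun S j -> R}), mixed tau -> EUdev P sg j tau <= EU P sg j.

Definition NME (g : mgame) (sg : profile) :=
  forall i, exists tau, Nash (subj g i) tau /\ tau i = sg i.

Definition chi (sg : profile) (v : pos) := forall i, 0 < sg i (v i).

Definition adapt (g : mgame) (v : pos) : mgame :=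
  MGame (actual g)
        [ffun i => [ffun s => if s == v then actual g v else subj g i s]].

Definition gset := mgame -> Prop.

Definition AD (M : gset) : gset :=
  fun g' => exists g sg v, [/\ M g, NME g sg, chi sg v & g' = adapt g v].

Fixpoint ADn (t : nat) (M : gset) : gset :=
  match t with 0 => M | t'.+1 => ADn t' (AD M) end.

Definition ADstar (M : gset) : gset := fun g => exists t, ADn t M g.

Definition set_eq (A B : gset) := forall g, A g <-> B g.

Definition is_length (M : gset) (L : nat) :=
  set_eq (ADn L.+1 M) (ADn L M) /\
  forall t, (t < L)%N -> ~ set_eq (ADn t.+1 M) (ADn t M).

Definition ADinf (M : gset) : gset :=
  fun g => exists L, is_length M L /\ ADn L M g.

Definition single (g0 : mgame) : gset := fun g => g = g0.

Definition terminal (g0 : mgame) : gset :=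
  fun g => ADstar (single g0) g /\ AD (single g) g.

Definition stable (g0 : mgame) (sg : profile) :=
  exists gh, [/\ ADinf (single g0) gh, NME gh sg &
                 forall v, chi sg v -> adapt gh v = gh].

Definition edge (g1 g2 : mgame) :=
  exists sg v, [/\ NME g1 sg, chi sg v & g2 = adapt g1 v].

(* sink nodes of Gamma' (Gamma without self-loops): out-degree 0 in Gamma' *)
Definition sink (g0 : mgame) : gset :=
  fun g => ADstar (single g0) g /\
           ~ (exists g2, [/\ ADstar (single g0) g2, edge g g2 & g2 <> g]).

End MisinformationGames.

(* Main.v *)
Require Import Defs.
From HB Require Import structures.
From mathcomp Require Import all_boot all_order all_algebra all_fingroup.
From mathcomp Require Import reals.
From mathcomp Require Import zify.
From mathcomp Require Import boolp classical_sets topology normedtype sequences.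
From mathcomp Require Import lra.
Set Implicit Arguments. Unset Strict Implicit. Unset Printing Implicit Defensive.
Import Order.TTheory GRing.Theory Num.Theory.
Import numFieldNormedType.Exports.
Local Open Scope ring_scope.

Local Open Scope nat_scope.
Lemma inv_odd (T : finType) (f : T -> T) : forall (A : {set T}),
  {in A, forall x, f x \in A} -> {in A, forall x, f (f x) = x} ->
  odd #|A| = odd #|[set x in A | f x == x]|.
Proof.
move=> A; elim: {A}_.+1 {-2}A (ltnSn #|A|) => // k IH A ltA fA ffA.
case: (pickP [pred x in A | f x != x]) => [x /andP[/= xA fx]|nofix]; last first.
  congr odd; apply: eq_card => x; rewrite inE; case xA: (x \in A) => //=.
  by have := nofix x; rewrite /= xA /= => /negbFE ->.
set A' := A :\ x :\ f x.
have fxA := fA x xA.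
have cardA : #|A| = #|A'|.+2.
  rewrite /A' (cardsD1 x A) xA (cardsD1 (f x) (A :\ x)) !inE.
  by rewrite fx fxA.
have A'sub y : y \in A' = [&& y != f x, y != x & y \in A] by rewrite !inE.
have fA' : {in A', forall y, f y \in A'}.
  move=> y; rewrite !A'sub => /and3P[yfx yx yA]; rewrite fA // andbT.
  apply/andP; split.
    by apply: contra yx => /eqP e; rewrite -(ffA y yA) e ffA.
  by apply: contra yfx => /eqP e; rewrite -e ffA.
have ffA' : {in A', forall y, f (f y) = y}.
  by move=> y; rewrite A'sub => /and3P[_ _ yA]; apply: ffA.
have ltA' : #|A'| < k by move: ltA; rewrite cardA; lia.
rewrite cardA /= negbK (IH A' ltA' fA' ffA').
congr odd; apply: eq_card => y; rewrite !inE.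
case: (eqVneq y x) => [->|yx]; first by rewrite (negbTE fx) !andbF.
case: (eqVneq y (f x)) => [->|yfx]; last by [].
by rewrite ffA // eq_sym (negbTE fx) !andbF.
Qed.

Lemma cover_inj (T : finType) (A : {set T}) (h : T -> nat) c :
  #|A| = c -> (forall l, l < c -> exists2 x, x \in A & h x = l) ->
  {in A &, injective h}.
Proof.
move=> cA cov; apply/dinjectiveP; rewrite /dinjectiveb.
apply: (@leq_size_uniq _ (iota 0 c)); first exact: iota_uniq.
  move=> l; rewrite mem_iota add0n => /cov[x xA <-].
  by apply: map_f; rewrite mem_enum.
by rewrite size_map size_iota -cardE cA.
Qed.

Section Kuhn.
Variable N' : nat.
Local Notation N := N'.+1.

Definition simp m := ({ffun 'I_m -> 'I_N} * {perm 'I_m})%type.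
Definition vtx m (s : simp m) (j : 'I_m.+1) : {ffun 'I_m -> nat} :=
  [ffun i => s.1 i + (s.2 i < j)].
Definition grid m (x : {ffun 'I_m -> nat}) := forall i, x i <= N.
Definition goodlab m (lab : {ffun 'I_m -> nat} -> nat) :=
  [/\ forall x, grid x -> lab x <= m,
      forall x i, grid x -> x i = 0 -> lab x != i.+1 &
      forall x i, grid x -> x i = N -> lab x != 0].
Definition full m (lab : {ffun 'I_m -> nat} -> nat) (s : simp m) :=
  [forall l : 'I_m.+1, [exists j, lab (vtx s j) == l]].

Lemma vtx_grid m (s : simp m) j : grid (vtx s j).
Proof.
move=> i; rewrite ffunE; have := ltn_ord (s.1 i).
have : nat_of_bool (s.2 i < j) <= 1 by case: (_ < _).
lia.
Qed.

Lemma full_inj m lab (s : simp m) : goodlab lab -> full lab s ->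
  injective (fun j => lab (vtx s j)).
Proof.
move=> [H1 _ _] /forallP F j1 j2 e.
apply: (@cover_inj _ [set: 'I_m.+1] (fun j => lab (vtx s j)) m.+1) => //.
  by rewrite cardsT card_ord.
move=> l ll; have /existsP[j /eqP e'] := F (Ordinal ll).
by exists j.
Qed.

Lemma lift_neq n (j : 'I_n.+1) (k : 'I_n.+1) : k != j -> exists k', k = lift j k'.
Proof. by case: (unliftP j k) => [k' ->|->]; [exists k'|rewrite eqxx]. Qed.

Section Step.
Variable m : nat.
Variable lab : {ffun 'I_m.+1 -> nat} -> nat.
Hypothesis Hl : goodlab lab.

Definition door (s : simp m.+1) (j : 'I_m.+2) :=
  [forall l : 'I_m.+1, [exists k : 'I_m.+1, lab (vtx s (lift j k)) == l]].

Lemma doorP s j : reflect (forall l : 'I_m.+1, exists2 k, k != j & lab (vtx s k) = l) (door s j).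
Proof.
apply: (iffP forallP) => [D l|D l].
  have /existsP[k /eqP e] := D l; exists (lift j k) => //; rewrite eq_sym; exact: neq_lift.
have [k kj e] := D l; have [k' ek] := lift_neq kj.
by apply/existsP; exists k'; rewrite -ek e.
Qed.

Lemma door_inj s j : door s j -> {in [set~ j] &, injective (fun k => lab (vtx s k))}.
Proof.
move=> /doorP D; apply: (@cover_inj _ _ _ m.+1); first by rewrite cardsC1 card_ord.
move=> l ll; have [k kj e] := D (Ordinal ll); exists k => //; by rewrite !inE.
Qed.

Definition tau (p : simp m.+1 * 'I_m.+2) : simp m.+1 * 'I_m.+2 :=
  if [pick k | (k != p.2) && (lab (vtx p.1 k) == lab (vtx p.1 p.2))] is Some k
  then (p.1, k) else p.

Definition P := [set p : simp m.+1 * 'I_m.+2 | door p.1 p.2].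

Lemma door_swap s j k : door s j -> k != j ->
  lab (vtx s k) = lab (vtx s j) -> door s k.
Proof.
move=> /doorP D' kj e; apply/doorP => l.
have [k1 k1j e1] := D' l.
case: (eqVneq k1 k) => [ek|k1k]; last by exists k1.
by exists j; [rewrite eq_sym|rewrite -e -ek].
Qed.

Lemma tauP : {in P, forall p, tau p \in P}.
Proof.
case=> s j; rewrite /tau inE /= => D.
case: pickP => [k /andP[kj /eqP e]|_]; last by rewrite inE.
by rewrite inE /=; apply: door_swap D kj e.
Qed.

Lemma tauK : {in P, forall p, tau (tau p) = p}.
Proof.
case=> s j; rewrite inE /= => D; rewrite {2}/tau /=.
case: pickP => [k /andP[kj /eqP e]|nok] /=; last first.
  by rewrite /tau /=; case: pickP => // k; rewrite nok.
rewrite /tau /=.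
have Dk := door_swap D kj e.
case: pickP => [k2 /andP[k2k /eqP e2]|nok2] /=; last first.
  by have := nok2 j; rewrite eq_sym kj e eqxx.
congr (_, _); apply: (door_inj Dk); rewrite ?inE ?k2k 1?eq_sym ?kj //.
by rewrite e2 e.
Qed.
Lemma fixtau : [set p in P | tau p == p] =
  [set p : simp m.+1 * 'I_m.+2 | full lab p.1 && (lab (vtx p.1 p.2) == m.+1)].
Proof.
have [H1 H2 H3] := Hl.
apply/setP => -[s j]; rewrite !inE /= /tau /=.
apply/idP/idP.
  case/andP => D; case: pickP => [k /andP[kj _] /eqP [] /eqP|nok _].
    by rewrite (negbTE kj).
  have /doorP D' := D.
  have ej : lab (vtx s j) = m.+1.
    have := H1 _ (vtx_grid s j); rewrite leq_eqVlt => /orP[/eqP //|lt].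
    have [k kj e] := D' (Ordinal lt).
    by have := nok k; rewrite kj e eqxx.
  rewrite ej eqxx andbT; apply/forallP => l.
  case: (ltnP l m.+1) => [ll|].
    by have [k _ e] := D' (Ordinal ll); apply/existsP; exists k; rewrite e.
  by have := ltn_ord l; rewrite ltnS => a b; apply/existsP; exists j; rewrite ej eqn_leq a b.
case/andP => F /eqP ej.
have inj := full_inj Hl F.
have D : door s j.
  apply/doorP => l.
  have /existsP[k /eqP e] := (forallP F) (widen_ord (leqnSn _) l).
  exists k => //; apply/eqP => kj; move: e; rewrite kj ej /= => e.
  by have := ltn_ord l; rewrite -e ltnn.
rewrite D /=; case: pickP => // k /andP[kj /eqP e].
by move: kj; rewrite (inj _ _ e) eqxx.
Qed.

Lemma card_fixtau : #|[set p in P | tau p == p]| = #|[set s | full lab s]|.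
Proof.
have [H1 H2 H3] := Hl.
rewrite fixtau.
pose G (s : simp m.+1) := (s, odflt ord0 [pick j | lab (vtx s j) == m.+1]).
have -> : [set p : simp m.+1 * 'I_m.+2 | full lab p.1 && (lab (vtx p.1 p.2) == m.+1)]
   = [set G s | s in [set s | full lab s]].
  apply/setP => -[s j]; rewrite !inE /=; apply/idP/imsetP.
    case/andP => F /eqP ej; exists s; rewrite ?inE //.
    rewrite /G; case: pickP => [j' /eqP e|/(_ j)]; last by rewrite ej eqxx.
    by rewrite /= (full_inj Hl F (etrans e (esym ej))).
  case=> s' F'; rewrite inE in F'; rewrite /G => -[-> ->]; rewrite F' /=.
  case: pickP => [j' /eqP -> //|no].
  have /existsP[j' /eqP e] := (forallP F') ord_max.
  by have := no j'; rewrite e eqxx.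
by rewrite card_imset // => s1 s2 [].
Qed.

Definition rotL : {perm 'I_m.+1} := perm (can_inj (@ord_predK m.+1)).
Definition rotR : {perm 'I_m.+1} := perm (can_inj (@ordSK m.+1)).

Lemma rotL_val (x : 'I_m.+1) : (rotL x : nat) = if x == ord0 then m else x.-1.
Proof.
rewrite permE /=; case: (eqVneq x ord0) => [->|x0] /=.
  by rewrite modn_small.
have xp : 0 < x by rewrite lt0n; apply: contra x0 => /eqP e; apply/eqP/val_inj.
have -> : (x + m.+1).-1 = x.-1 + m.+1 by lia.
by rewrite modnDr modn_small //; have := ltn_ord x; lia.
Qed.

Lemma rotR_val (x : 'I_m.+1) : (rotR x : nat) = if x == ord_max then 0 else x.+1.
Proof.
rewrite permE /=; case: (eqVneq x ord_max) => [->|xm] /=.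
  by rewrite modnn.
have xp : x < m by have := ltn_ord x; rewrite ltnS leq_eqVlt => /orP[/eqP e|//];
  case/eqP: xm; apply/val_inj.
by rewrite modn_small.
Qed.

Lemma rotLR : (rotL * rotR = 1)%g.
Proof. by apply/permP => x; rewrite permM perm1 !permE /= ord_predK. Qed.
Lemma rotRL : (rotR * rotL = 1)%g.
Proof. by apply/permP => x; rewrite permM perm1 !permE /= ordSK. Qed.

Definition bump1 (b : {ffun 'I_m.+1 -> 'I_N}) c (up : bool) : {ffun 'I_m.+1 -> 'I_N} :=
  [ffun i => if i == c then inord (if up then (b c).+1 else (b c).-1) else b i].

Definition tj (j : 'I_m.+2) : {perm 'I_m.+1} := tperm (inord j.-1) (inord j).

Definition rho (p : simp m.+1 * 'I_m.+2) : simp m.+1 * 'I_m.+2 :=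
  if p.2 == ord0 then
    (if (p.1.1 (p.1.2^-1 ord0)%g).+1 < N then
       ((bump1 p.1.1 (p.1.2^-1 ord0)%g true, (p.1.2 * rotL)%g), ord_max) else p)
  else if p.2 == ord_max then
    (if 0 < p.1.1 (p.1.2^-1 ord_max)%g then
       ((bump1 p.1.1 (p.1.2^-1 ord_max)%g false, (p.1.2 * rotR)%g), ord0) else p)
  else ((p.1.1, (p.1.2 * tj p.2)%g), p.2).

Lemma V0 (s : simp m.+1) : (s.1 (s.2^-1 ord0)%g).+1 < N -> forall k : 'I_m.+1,
  vtx (bump1 s.1 (s.2^-1 ord0)%g true, (s.2 * rotL)%g) (lift ord_max k) =
  vtx s (lift ord0 k).
Proof.
move=> lt k; apply/ffunP => i; rewrite !ffunE permM lift_max lift0 rotL_val /=.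
have kl := ltn_ord k.
case: (eqVneq i (s.2^-1 ord0)%g) => [->|ic].
  rewrite permKV eqxx inordK // /=.
  have -> : (m < k) = false by apply/negbTE; rewrite -leqNgt -ltnS.
  by rewrite addn0 addn1.
have ri : s.2 i != ord0.
  by apply: contra ic => /eqP <-; rewrite permK.
rewrite (negbTE ri); congr (_ + nat_of_bool _).
have : 0 < s.2 i by rewrite lt0n; apply: contra ri => /eqP e; apply/eqP/val_inj.
by move=> h; apply/idP/idP; lia.
Qed.

Lemma VM (s : simp m.+1) : 0 < s.1 (s.2^-1 ord_max)%g -> forall k : 'I_m.+1,
  vtx (bump1 s.1 (s.2^-1 ord_max)%g false, (s.2 * rotR)%g) (lift ord0 k) =
  vtx s (lift ord_max k).
Proof.
move=> lt k; apply/ffunP => i; rewrite !ffunE permM lift_max lift0 rotR_val /=.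
have kl := ltn_ord k.
case: (eqVneq i (s.2^-1 ord_max)%g) => [->|ic].
  rewrite permKV eqxx inordK /=; last by have := ltn_ord (s.1 (s.2^-1 ord_max)%g); lia.
  have -> : (m < k) = false by apply/negbTE; rewrite -leqNgt -ltnS.
  by rewrite addn0 addn1; lia.
have ri : s.2 i != ord_max.
  by apply: contra ic => /eqP <-; rewrite permK.
by rewrite (negbTE ri).
Qed.

Lemma Vmid (s : simp m.+1) (j : 'I_m.+2) : j != ord0 -> j != ord_max ->
  forall k, k != j -> vtx (s.1, (s.2 * tj j)%g) k = vtx s k.
Proof.
move=> j0 jm k kj; apply/ffunP => i; rewrite !ffunE permM /=; congr (_ + nat_of_bool _).
have jp : 0 < j by rewrite lt0n; apply: contra j0 => /eqP e; apply/eqP/val_inj.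
have jl : j <= m.
  have := ltn_ord j; rewrite ltnS leq_eqVlt => /orP[/eqP e|//].
  by case/eqP: jm; apply/val_inj.
have kj' : (k : nat) != j by [].
rewrite /tj; case: tpermP => [->|->|//]; rewrite !inordK; try lia;
  by apply/idP/idP; lia.
Qed.

Lemma max_neq0 : (ord_max : 'I_m.+2) != ord0.
Proof. by []. Qed.

Lemma door_rho p : door (rho p).1 (rho p).2 = door p.1 p.2.
Proof.
case: p => s j; rewrite /rho /=.
case: (eqVneq j ord0) => [->|j0] /=.
  case: ifP => // lt; rewrite /door; apply: eq_forallb => l; apply: eq_existsb => k.
  by rewrite V0.
case: (eqVneq j ord_max) => [->|jm] /=.
  case: ifP => // lt; rewrite /door; apply: eq_forallb => l; apply: eq_existsb => k.
  by rewrite VM.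
rewrite /door; apply: eq_forallb => l; apply: eq_existsb => k.
by rewrite Vmid // eq_sym neq_lift.
Qed.

Lemma rhoP : {in P, forall p, rho p \in P}.
Proof. by move=> p; rewrite !inE door_rho. Qed.

Lemma bump1K (b : {ffun 'I_m.+1 -> 'I_N}) c : (b c).+1 < N -> bump1 (bump1 b c true) c false = b.
Proof.
move=> lt; apply/ffunP => i; rewrite !ffunE; case: (eqVneq i c) => [->|//].
by rewrite eqxx inordK //= inord_val.
Qed.

Lemma bump1K' (b : {ffun 'I_m.+1 -> 'I_N}) c : 0 < b c -> bump1 (bump1 b c false) c true = b.
Proof.
move=> lt; apply/ffunP => i; rewrite !ffunE; case: (eqVneq i c) => [->|//].
rewrite eqxx inordK /=; last by have := ltn_ord (b c); lia.
by rewrite prednK // inord_val.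
Qed.

Lemma rhoK p : rho (rho p) = p.
Proof.
case: p => -[b r] j; rewrite {2}/rho /=.
case: (eqVneq j ord0) => [->|j0] /=.
  case: ifP => lt /=; last by rewrite /rho /= lt.
  rewrite /rho /=.
  have ec : ((r * rotL)^-1 ord_max)%g = (r^-1 ord0)%g.
    apply: (@perm_inj _ (r * rotL)%g); rewrite permKV permM permKV.
    by apply: ord_inj; rewrite rotL_val eqxx.
  rewrite ec !ffunE !eqxx inordK //= bump1K // -mulgA rotLR mulg1.
  by [].
case: (eqVneq j ord_max) => [->|jm] /=.
  case: ifP => lt /=; last by rewrite /rho /= eqxx lt.
  rewrite /rho /=.
  have ec : ((r * rotR)^-1 ord0)%g = (r^-1 ord_max)%g.
    apply: (@perm_inj _ (r * rotR)%g); rewrite permKV permM permKV.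
    by apply: ord_inj; rewrite rotR_val eqxx.
  rewrite ec !ffunE !eqxx inordK /=; last by have := ltn_ord (b (r^-1 ord_max)%g); lia.
  have -> : (b (r^-1 ord_max)%g).-1.+1 < N.
    by have := ltn_ord (b (r^-1 ord_max)%g); lia.
  by rewrite bump1K' // -mulgA rotRL mulg1.
rewrite /rho /= (negbTE j0) (negbTE jm) -mulgA.
have -> : (tj j * tj j = 1)%g by apply/permP => x; rewrite permM perm1 tpermK.
by rewrite mulg1.
Qed.

Definition ext (x : {ffun 'I_m -> nat}) : {ffun 'I_m.+1 -> nat} :=
  [ffun i => if unlift ord_max i is Some k then x k else 0].
Definition lab' x := lab (ext x).
Definition extb (b0 : {ffun 'I_m -> 'I_N}) : {ffun 'I_m.+1 -> 'I_N} :=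
  [ffun i => if unlift ord_max i is Some k then b0 k else ord0].
Definition E (s0 : simp m) : simp m.+1 * 'I_m.+2 :=
  ((extb s0.1, lift_perm ord_max ord_max s0.2), ord_max).

Lemma bump_small h k : k < h -> bump h k = k.
Proof. by move=> lt; rewrite /bump leqNgt lt. Qed.

Lemma vtxE s0 k : vtx (E s0).1 (lift ord_max k) = ext (vtx s0 k).
Proof.
apply/ffunP => i; rewrite !ffunE /=.
case: (unliftP ord_max i) => [i' ->|->] /=; rewrite ?ffunE.
  by rewrite lift_perm_lift lift_max bump_small.
rewrite lift_perm_id bump_small //=.
by have := ltn_ord k; rewrite ltnS leqNgt => /negbTE ->.
Qed.

Lemma ext_grid x : grid x -> grid (ext x).
Proof. by move=> g i; rewrite ffunE; case: unlift => // k. Qed.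

Lemma goodlab' : goodlab lab'.
Proof.
have [H1 H2 H3] := Hl; split.
- move=> x g; rewrite /lab'; have := H1 _ (ext_grid g).
  rewrite leq_eqVlt => /orP[/eqP e|//].
  have := H2 _ ord_max (ext_grid g); rewrite ffunE unlift_none e => /(_ erefl).
  by rewrite eqxx.
- move=> x i g xi; have := H2 _ (lift ord_max i) (ext_grid g).
  by rewrite ffunE liftK lift_max; apply.
- move=> x i g xi; have := H3 _ (lift ord_max i) (ext_grid g).
  by rewrite ffunE liftK; apply.
Qed.

Lemma fixrho : [set p in P | rho p == p] = [set E s0 | s0 in [set s0 | full lab' s0]].
Proof.
have [H1 H2 H3] := Hl.
apply/setP => -[[b r] j]; rewrite !inE /=; apply/idP/imsetP.
  case/andP => D; rewrite /rho /=.
  case: (eqVneq j ord0) => [ej|j0] /=.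
    case: ifP => [lt /eqP [] _ _ e|]; first by move: e; rewrite ej.
    move=> nlt _; have /existsP[k /eqP e] := (forallP D) ord0.
    have := H3 _ (r^-1 ord0)%g (vtx_grid (b, r) (lift j k)).
    rewrite e eqxx ffunE /= permKV ej => H; suff : false by []; apply: H.
    have h1 : (b (r^-1 ord0)%g).+1 >= N by rewrite leqNgt nlt.
    have h2 := ltn_ord (b (r^-1 ord0)%g).
    have -> : (ord0 < bump ord0 k) = true by rewrite /bump.
    by rewrite addn1; apply/eqP; rewrite eqn_leq h2 h1.
  case: (eqVneq j ord_max) => [ej|jm] /=.
    case: ifP => [lt /eqP [] _ _ e|]; first by move: e; rewrite ej.
    move=> nlt _; set c := (r^-1 ord_max)%g.
    have bc : b c = 0 :> nat by move: nlt; rewrite lt0n => /negbFE/eqP.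
    have cm : c = ord_max.
      apply/eqP; apply/negPn/negP => cm.
      have cl : c.+1 < m.+1.
        by have := ltn_ord c; rewrite ltnS leq_eqVlt => /orP[/eqP e|//];
          case/negP: cm; apply/eqP/ord_inj.
      have /existsP[k /eqP e] := (forallP D) (Ordinal cl).
      have := H2 _ c (vtx_grid (b, r) (lift j k)).
      rewrite e eqxx ffunE /= permKV bc ej bump_small //=.
      by rewrite ltnNge -ltnS ltn_ord /= => /(_ erefl).
    have rm : r ord_max = ord_max by rewrite -{1}cm permKV.
    pose f k := odflt k (unlift ord_max (r (lift ord_max k))).
    have rf k : r (lift ord_max k) = lift ord_max (f k).
      rewrite /f; case: (unliftP ord_max (r (lift ord_max k))) => [k' -> //|e].
      by move: e; rewrite -{2}rm => /perm_inj/eqP; rewrite eq_sym (negbTE (neq_lift _ _)).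
    have finj : injective f.
      by move=> k1 k2 e; apply: (@lift_inj _ ord_max); apply: (@perm_inj _ r); rewrite !rf e.
    pose s0 : simp m := ([ffun k => b (lift ord_max k)], perm finj).
    have Es0 : E s0 = ((b, r), j).
      rewrite /E ej; congr (_, _); congr (_, _).
        apply/ffunP => i; rewrite !ffunE; case: (unliftP ord_max i) => [k ->|->].
          by rewrite /= ffunE.
        by apply: ord_inj; rewrite -cm bc.
      apply/permP => i; case: (unliftP ord_max i) => [k ->|->].
        by rewrite lift_perm_lift permE rf.
      by rewrite lift_perm_id rm.
    exists s0 => //; rewrite inE.
    have : door (E s0).1 (E s0).2 by rewrite Es0.
    rewrite /door => /forallP F; apply/forallP => l.
    have /existsP[k /eqP e] := F l; apply/existsP; exists k.
    by rewrite /lab' -vtxE; apply/eqP; exact: e.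
  move=> /eqP [] e.
  have := congr1 (fun q : {perm _} => q (r^-1 (inord j.-1))%g) e.
  rewrite permM permKV /tj tpermL => /(congr1 val).
  have jp : 0 < j by rewrite lt0n; apply: contra j0 => /eqP e'; apply/eqP/val_inj.
  have jl : j <= m.
    have := ltn_ord j; rewrite ltnS leq_eqVlt => /orP[/eqP e'|//].
    by case/eqP: jm; apply/val_inj.
  by rewrite /= !inordK; lia.
case=> s0; rewrite inE => F [-> -> ->].
apply/andP; split.
  rewrite /door; apply/forallP => l; have /existsP[k /eqP e] := (forallP F) l.
  by apply/existsP; exists k; apply/eqP; rewrite -e /lab' -vtxE.
rewrite /rho /= eqxx.
have -> : ((lift_perm ord_max ord_max s0.2)^-1 ord_max)%g = ord_max.
  by apply: (@perm_inj _ (lift_perm ord_max ord_max s0.2)); rewrite permKV lift_perm_id.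
by rewrite ffunE unlift_none /=.
Qed.

Lemma card_fixrho : #|[set p in P | rho p == p]| = #|[set s0 | full lab' s0]|.
Proof.
rewrite fixrho card_imset // => -[b1 s1] [b2 s2] [] eb es.
congr (_, _).
  apply/ffunP => k; have := congr1 (fun f : {ffun _ -> _} => f (lift ord_max k)) eb.
  by rewrite /= !ffunE liftK.
apply/permP => k; have := congr1 (fun f : {perm _} => f (lift ord_max k)) es.
by rewrite /= !lift_perm_lift => /lift_inj.
Qed.

Lemma step_odd : odd #|[set s | full lab s]| = odd #|[set s0 | full lab' s0]|.
Proof.
rewrite -card_fixtau -inv_odd; [|exact: tauP|exact: tauK].
rewrite (inv_odd rhoP) ?card_fixrho //.
by move=> p _; exact: rhoK.
Qed.

End Step.
Lemma kuhn_odd m : forall lab : {ffun 'I_m -> nat} -> nat, goodlab lab ->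
  odd #|[set s | full lab s]|.
Proof.
elim: m => [|m IH] lab Hl.
  have [H1 _ _] := Hl.
  have -> : [set s | full lab s] = finset.setT.
    apply/setP => s; rewrite !inE; apply/forallP => l; apply/existsP; exists ord0.
    have := H1 _ (vtx_grid s ord0); rewrite leqn0 => /eqP ->.
    by case: l => -[|l].
  by rewrite cardsT card_prod card_ffun card_Sn !card_ord.
rewrite (step_odd Hl); exact: IH _ (goodlab' Hl).
Qed.

Theorem kuhn m (lab : {ffun 'I_m -> nat} -> nat) : goodlab lab ->
  exists s : simp m, full lab s.
Proof.
move=> Hl; have := kuhn_odd Hl.
case: (pickP [pred s | full lab s]) => [s F|no]; first by exists s.
by rewrite (_ : [set s | full lab s] = finset.set0) ?cards0 //; apply/setP => s; rewrite !inE; exact: no.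
Qed.

End Kuhn.

Local Open Scope ring_scope.

Section Analysis.
Variable R : realType.
Local Open Scope classical_set_scope.

Lemma bnd01 (u : nat -> R) : (forall n, 0 <= u n <= 1) -> bounded_fun u.
Proof.
move=> H; exists 1; split; first by [].
move=> M M1 x _ /=; have /andP[h1 h2] := H x; rewrite ger0_norm //.
exact: le_trans h2 (ltW M1).
Qed.

Lemma conv_eps (u : nat -> R) l : u n @[n --> \oo] --> l <->
  forall e, 0 < e -> exists N, forall n, (N <= n)%N -> `|l - u n| < e.
Proof.
rewrite cvgrPdist_lt; split => H e e0; have := H e e0.
  by case=> N _ HN; exists N.
by case=> N HN; exists N.
Qed.

Lemma incr_ge (phi : nat -> nat) : increasing_seq phi -> forall n, (n <= phi n)%N.
Proof.
move=> inc; elim=> // n IH.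
have : (phi n < phi n.+1)%N.
  by have := inc n.+1 n; rewrite leEnat ltnn ltnNge => ->.
by move=> h; apply: leq_ltn_trans IH h.
Qed.

Lemma cvg_subseq (u : nat -> R) (l : R) (phi : nat -> nat) : increasing_seq phi ->
  u n @[n --> \oo] --> l -> u (phi n) @[n --> \oo] --> l.
Proof.
move=> inc /conv_eps H; apply/conv_eps => e e0; have [N HN] := H e e0.
by exists N => n Nn; apply: HN; apply: leq_trans Nn (incr_ge inc n).
Qed.

Lemma incr_comp (phi psi : nat -> nat) : increasing_seq phi -> increasing_seq psi ->
  increasing_seq (phi \o psi).
Proof. by move=> a b n m /=; rewrite a; exact: b. Qed.

Lemma bw_multi M (u : nat -> 'I_M -> R) : (forall n i, 0 <= u n i <= 1) ->
  exists phi : nat -> nat, increasing_seq phi /\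
    exists p : 'I_M -> R, forall i, u (phi n) i @[n --> \oo] --> p i.
Proof.
move=> H.
have : forall s : seq 'I_M, exists phi : nat -> nat, increasing_seq phi /\
    forall i, i \in s -> cvgn (fun n => u (phi n) i).
  elim=> [|i s [phi [inc IH]]].
    by exists id; split.
  have [psi inc2 c] := bolzano_weierstrass (bnd01 (fun n => H (phi n) i)).
  exists (phi \o psi); split; first exact: incr_comp.
  move=> k; rewrite in_cons => /orP[/eqP ->//|ks].
  have /cvg_ex[l hl] := IH k ks; apply/cvg_ex; exists l.
  exact: (cvg_subseq (u := fun n => u (phi n) k)).
case/(_ (enum 'I_M)) => phi [inc C]; exists phi; split => //.
exists (fun i => lim (u (phi n) i @[n --> \oo])) => i.
by apply: C; rewrite mem_enum.
Qed.

Lemma small_inv (e : R) : 0 < e -> exists N : nat, forall n, (N <= n)%N -> n.+1%:R^-1 < e.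
Proof.
move=> e0; exists (Num.Def.archi_bound e^-1) => n Nn.
have h : e^-1 < (Num.Def.archi_bound e^-1)%:R.
  by apply: archi_boundP; rewrite invr_ge0 ltW.
rewrite invf_plt ?posrE ?ltr0Sn //.
apply: lt_le_trans h _; rewrite ler_nat; exact: leqW.
Qed.

Lemma close_cvg (u v : nat -> R) (l : R) :
  (forall n, `|v n - u n| <= n.+1%:R^-1) ->
  u n @[n --> \oo] --> l -> v n @[n --> \oo] --> l.
Proof.
move=> d /conv_eps H; apply/conv_eps => e e0.
have e20 : 0 < e / 2 by rewrite divr_gt0.
have [N1 H1] := H _ e20; have [N2 H2] := small_inv e20.
exists (maxn N1 N2) => n Nn.
have h1 := H1 n (leq_trans (leq_maxl _ _) Nn).
have h2 := H2 n (leq_trans (leq_maxr _ _) Nn).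
have -> : l - v n = (l - u n) + (u n - v n) by rewrite addrA subrK.
apply: le_lt_trans (ler_normD _ _) _.
rewrite [e]splitr; apply: ltr_leD => //.
by rewrite distrC; apply: le_trans (d n) (ltW h2).
Qed.

Definition cube M (x : 'I_M -> R) := forall i, 0 <= x i <= 1.
Definition scont M (F : ('I_M -> R) -> R) :=
  forall (u : nat -> 'I_M -> R) (p : 'I_M -> R),
    (forall i, u n i @[n --> \oo] --> p i) -> F (u n) @[n --> \oo] --> F p.

Section Scont.
Variable M : nat.
Implicit Types F G : ('I_M -> R) -> R.

Lemma scont_cst (c : R) : scont (fun _ : 'I_M -> R => c).
Proof. by move=> u p _; exact: cvg_cst. Qed.

Lemma scont_proj k : scont (fun y : 'I_M -> R => y k).
Proof. by move=> u p H; exact: H. Qed.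

Lemma scont_add F G : scont F -> scont G -> scont (fun y => F y + G y).
Proof. by move=> hF hG u p H; apply: cvgD; [exact: hF|exact: hG]. Qed.

Lemma scont_mul F G : scont F -> scont G -> scont (fun y => F y * G y).
Proof. by move=> hF hG u p H; apply: cvgM; [exact: hF|exact: hG]. Qed.

Lemma scont_opp F : scont F -> scont (fun y => - F y).
Proof. by move=> hF u p H; apply: cvgN; exact: hF. Qed.

Lemma scont_inv F : (forall y, F y != 0) -> scont F -> scont (fun y => (F y)^-1).
Proof. by move=> nz hF u p H; apply: cvgV; [exact: nz|exact: hF]. Qed.

Lemma scont_norm F : scont F -> scont (fun y => `|F y|).
Proof. by move=> hF u p H; apply: cvg_norm; exact: hF. Qed.

Lemma maxE (a b : R) : Num.max a b = (a + b + `|a - b|) / 2.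
Proof.
case: (leP a b) => h.
  rewrite ler0_norm ?subr_le0 //; lra.
rewrite gtr0_norm ?subr_gt0 //; lra.
Qed.

Lemma scont_max F G : scont F -> scont G -> scont (fun y => Num.max (F y) (G y)).
Proof.
move=> hF hG; have : scont (fun y => (F y + G y + `|F y - G y|) * 2^-1).
  apply: scont_mul; last exact: scont_cst.
  apply: scont_add; first exact: scont_add.
  by apply: scont_norm; apply: scont_add => //; exact: scont_opp.
by move=> h u p H; under eq_cvg do rewrite maxE; rewrite maxE; exact: h.
Qed.

Lemma scont_sum (I : Type) (r : seq I) (P : pred I) (G : I -> ('I_M -> R) -> R) :
  (forall i, scont (G i)) -> scont (fun y => \sum_(i <- r | P i) G i y).
Proof.
move=> hG u p H; elim: r => [|i r IH].
  rewrite big_nil; under eq_cvg do rewrite big_nil; exact: cvg_cst.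
rewrite big_cons; under eq_cvg do rewrite big_cons.
case: ifPn => _ //; apply: cvgD => //; exact: hG.
Qed.

Lemma scont_prod (I : Type) (r : seq I) (P : pred I) (G : I -> ('I_M -> R) -> R) :
  (forall i, scont (G i)) -> scont (fun y => \prod_(i <- r | P i) G i y).
Proof.
move=> hG u p H; elim: r => [|i r IH].
  rewrite big_nil; under eq_cvg do rewrite big_nil; exact: cvg_cst.
rewrite big_cons; under eq_cvg do rewrite big_cons.
case: ifPn => _ //; apply: cvgM => //; exact: hG.
Qed.

End Scont.

Section Brouwer.
Variable M : nat.
Variable f : ('I_M -> R) -> 'I_M -> R.
Hypothesis fcube : forall x, cube x -> cube (f x).
Hypothesis fcont : forall i, scont (fun x => f x i).

Definition pt K (x : {ffun 'I_M -> nat}) : 'I_M -> R := fun k => (x k)%:R / K.+1%:R.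

Lemma pt_cube K x : grid K x -> cube (pt K x).
Proof.
move=> g k; rewrite /pt divr_ge0 ?ler0n //= ler_pdivrMr ?ltr0Sn // mul1r ler_nat.
exact: g.
Qed.

Definition labK K (x : {ffun 'I_M -> nat}) : nat :=
  if [pick i | (0 < x i)%N && (f (pt K x) i <= pt K x i)] is Some i then i.+1 else 0%N.

Lemma labK_good K : goodlab K (labK K).
Proof.
split.
- by move=> x _; rewrite /labK; case: pickP => // i _; exact: ltn_ord.
- move=> x i _ xi; rewrite /labK; case: pickP => // i' /andP[h _].
  by apply/eqP => -[e]; move: h; rewrite (_ : i' = i) ?xi //; apply: ord_inj.
- move=> x i g xi; rewrite /labK; case: pickP => // /(_ i) /=.
  have := fcube (pt_cube g) i; case/andP => _ h.
  by rewrite xi ltn0Sn /= /pt xi divff ?pnatr_eq0 // h.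
Qed.

Lemma pt_dist K (s : simp K M) (j : 'I_M.+1) k :
  `|pt K (vtx s j) k - pt K (vtx s ord0) k| <= K.+1%:R^-1.
Proof.
rewrite /pt !ffunE /= addn0 natrD mulrDl addrAC subrr add0r.
rewrite ger0_norm ?divr_ge0 ?ler0n // ler_pdivrMr ?ltr0Sn // mulVf ?pnatr_eq0 //.
by rewrite (_ : 1 = 1%:R) // ler_nat leq_b1.
Qed.

Lemma approx K : exists t : ('I_M -> R) * ('I_M -> R) * ('I_M -> 'I_M -> R),
  [/\ cube t.1.1, (forall k, `|t.1.2 k - t.1.1 k| <= K.+1%:R^-1),
      (forall i k, `|t.2 i k - t.1.1 k| <= K.+1%:R^-1),
      (forall k, t.1.2 k <= f t.1.2 k) & (forall i, f (t.2 i) i <= t.2 i i)].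
Proof.
have [s F] := kuhn (labK_good K).
pose jl (l : 'I_M.+1) := odflt ord0 [pick j | labK K (vtx s j) == l].
have jlP l : labK K (vtx s (jl l)) = l.
  have /existsP[j /eqP e] := (forallP F) l.
  rewrite /jl; case: pickP => [j' /eqP //|/(_ j)]; by rewrite e eqxx.
exists (pt K (vtx s ord0), pt K (vtx s (jl ord0)), fun i => pt K (vtx s (jl (lift ord0 i)))).
split => /=.
- exact: pt_cube (vtx_grid s ord0).
- by move=> k; exact: pt_dist.
- by move=> i k; exact: pt_dist.
- move=> k; have := jlP ord0; rewrite /labK; case: pickP => // no _.
  have := no k; rewrite /=.
  have g := vtx_grid s (jl ord0).
  case: (posnP (vtx s (jl ord0) k)) => [e _|pos].
    have := fcube (pt_cube g) k; case/andP => h _.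
    by rewrite {1}/pt e mul0r.
  by move=> /negbT; rewrite -ltNge => /ltW.
- move=> i; have := jlP (lift ord0 i); rewrite /labK; case: pickP => //.
  move=> i' /andP[_ h] [e]; move: h; rewrite (_ : i' = i) //; apply: ord_inj.
  by move: e; rewrite add0n.
Qed.

Theorem brouwer_cube : exists x, cube x /\ forall i, f x i = x i.
Proof.
pose T K := sval (cid (approx K)).
have TP K : _ := svalP (cid (approx K)).
pose p K := (T K).1.1; pose q0 K := (T K).1.2; pose q K := (T K).2.
have pc K : cube (p K) by have [] := TP K.
have [phi [inc [P cP]]] := bw_multi (u := p) (fun n i => pc n i).
have dist n : (n.+1%:R^-1 : R) >= (phi n).+1%:R^-1.
  rewrite lef_pV2 ?posrE ?ltr0Sn // ler_nat ltnS; exact: incr_ge.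
have cq0 k : q0 (phi n) k @[n --> \oo] --> P k.
  apply: (close_cvg _ (cP k)) => n; have [_ d _ _ _] := TP (phi n).
  exact: le_trans (d k) (dist n).
have cq i k : q (phi n) i k @[n --> \oo] --> P k.
  apply: (close_cvg _ (cP k)) => n; have [_ _ d _ _] := TP (phi n).
  exact: le_trans (d i k) (dist n).
exists P; split.
  move=> k; apply/andP; split.
    apply: (ler_cvg_to (cvg_cst 0) (cP k)); apply: nearW => n.
    by have /andP[] := pc (phi n) k.
  apply: (ler_cvg_to (cP k) (cvg_cst (1 : R))); apply: nearW => n.
  by have /andP[] := pc (phi n) k.
move=> k; apply/le_anti/andP; split.
  have c1 := @fcont k (fun n => q (phi n) k) P (cq k).
  apply: (ler_cvg_to c1 (cq k k)); apply: nearW => n.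
  by have [_ _ _ _ h] := TP (phi n); exact: h.
have c2 := @fcont k (fun n => q0 (phi n)) P cq0.
apply: (ler_cvg_to (cq0 k) c2); apply: nearW => n.
by have [_ _ _ h _] := TP (phi n); exact: h.
Qed.

End Brouwer.

End Analysis.


Section ScontExt.
Variable R : realType.
Lemma scont_ext M (F G : ('I_M -> R) -> R) : (forall y, F y = G y) -> scont F -> scont G.
Proof. by move=> E hF u p H; under eq_cvg do rewrite -E; rewrite -E; exact: hF. Qed.
End ScontExt.

Section Nash.
Variables (R : realType) (n : nat) (S : 'I_n -> finType).
Hypothesis HS : forall i, (0 < #|S i|)%N.
Variable P : payoff R S.

Local Notation TT := {i : 'I_n & S i}.
Local Notation M := #|{: TT}|.

Definition yv (y : 'I_M -> R) i (a : S i) : R := y (enum_rank (@existT _ (fun j => S j) i a : TT)).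
Definition sy (y : 'I_M -> R) i : R := \sum_(a : S i) yv y a.
Definition mm (y : 'I_M -> R) i : R := Num.max 1 (sy y i).
Definition sgm (y : 'I_M -> R) : profile R S :=
  fun i => [ffun a => yv y a / mm y i + (1 - sy y i / mm y i) / #|S i|%:R].
Definition pure j (a : S j) : {ffun S j -> R} := [ffun b => (b == a)%:R].
Definition gain y i (a : S i) := EUdev P (sgm y) (pure a) - EU P (sgm y) i.
Definition gp y i (a : S i) := Num.max 0 (gain y a).
Definition Fm y i (a : S i) := (sgm y i a + gp y a) / (1 + \sum_(b : S i) gp y b).
Definition fN (y : 'I_M -> R) (k : 'I_M) : R := Fm y (tagged (enum_val k)).

Lemma mm_ge1 y i : 1 <= mm y i.
Proof. by rewrite /mm le_max lexx. Qed.
Lemma mm_gt0 y i : 0 < mm y i.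
Proof. exact: lt_le_trans ltr01 (mm_ge1 y i). Qed.
Lemma mm_neq0 y i : mm y i != 0.
Proof. by rewrite gt_eqF // mm_gt0. Qed.

Lemma sum_cst (T : finType) (c : R) : \sum_(a : T) c = c * #|T|%:R.
Proof. by rewrite sumr_const mulr_natr. Qed.

Lemma sgm_sum y i : \sum_(a : S i) sgm y i a = 1.
Proof.
under eq_bigr do rewrite ffunE.
rewrite big_split /= -mulr_suml sum_cst -/(sy y i).
have cS : #|S i|%:R != 0 :> R by rewrite pnatr_eq0 -lt0n.
by rewrite divfK // addrC subrK.
Qed.

Lemma sgm_ge0 y : cube y -> forall i a, 0 <= sgm y i a.
Proof.
move=> cy i a; rewrite ffunE; apply: addr_ge0.
  by rewrite divr_ge0 ?(ltW (mm_gt0 y i)) //; have /andP[] := cy (enum_rank (@existT _ (fun j => S j) i a : TT)).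
rewrite divr_ge0 ?ler0n // subr_ge0 ler_pdivrMr ?mm_gt0 // mul1r.
by rewrite /mm le_max lexx orbT.
Qed.

Lemma sgm_le1 y : cube y -> forall i a, sgm y i a <= 1.
Proof.
move=> cy i a; rewrite -(sgm_sum y i) (bigD1 a) //= lerDl.
by apply: sumr_ge0 => b _; exact: sgm_ge0.
Qed.

Lemma gp_ge0 y i (a : S i) : 0 <= gp y a.
Proof. by rewrite /gp le_max lexx. Qed.

Lemma den_gt0 y i : 0 < 1 + \sum_(b : S i) gp y b.
Proof. by rewrite ltr_wpDr // sumr_ge0 // => b _; exact: gp_ge0. Qed.

Lemma fN_cube y : cube y -> cube (fN y).
Proof.
move=> cy k; rewrite /fN /Fm; set i := tag _; set a := tagged _.
apply/andP; split.
  by rewrite divr_ge0 ?(ltW (den_gt0 y i)) // addr_ge0 ?gp_ge0 // sgm_ge0.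
rewrite ler_pdivrMr ?den_gt0 // mul1r; apply: lerD; first exact: sgm_le1.
by rewrite (bigD1 a) //= lerDl sumr_ge0 // => b _; exact: gp_ge0.
Qed.

Lemma scont_sgm i (a : S i) : scont (fun y => sgm y i a).
Proof.
apply: (scont_ext (F := fun y => yv y a * (mm y i)^-1 +
   (1 - sy y i * (mm y i)^-1) * (#|S i|%:R)^-1)).
  by move=> y; rewrite ffunE.
have hmm : scont (fun y => (mm y i)^-1).
  apply: scont_inv; first by move=> y; exact: mm_neq0.
  apply: scont_max; first exact: scont_cst.
  by apply: scont_sum => b; exact: scont_proj.
apply: scont_add; first by apply: scont_mul => //; exact: scont_proj.
apply: scont_mul; last exact: scont_cst.
apply: scont_add; first exact: scont_cst.
apply: scont_opp; apply: scont_mul => //.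
by apply: scont_sum => b; exact: scont_proj.
Qed.

Lemma scont_EU j : scont (fun y => EU P (sgm y) j).
Proof.
rewrite /EU; apply: scont_sum => s; apply: scont_mul; last exact: scont_cst.
by apply: scont_prod => i; exact: scont_sgm.
Qed.

Lemma scont_EUdev j (a : S j) : scont (fun y => EUdev P (sgm y) (pure a)).
Proof.
rewrite /EUdev; apply: scont_sum => s; apply: scont_mul; last exact: scont_cst.
apply: scont_mul; first exact: scont_cst.
by apply: scont_prod => i; exact: scont_sgm.
Qed.

Lemma scont_gp i (a : S i) : scont (fun y => gp y a).
Proof.
apply: scont_max; first exact: scont_cst.
apply: scont_add; first exact: scont_EUdev.
by apply: scont_opp; exact: scont_EU.
Qed.

Lemma scont_Fm i (a : S i) : scont (fun y => Fm y a).
Proof.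
apply: scont_mul.
  by apply: scont_add; [exact: scont_sgm|exact: scont_gp].
apply: scont_inv; first by move=> y; rewrite gt_eqF // den_gt0.
apply: scont_add; first exact: scont_cst.
by apply: scont_sum => b; exact: scont_gp.
Qed.

Lemma EUdev_lin (sg : profile R S) j (tau : {ffun S j -> R}) :
  EUdev P sg tau = \sum_(a : S j) tau a * EUdev P sg (pure a).
Proof.
rewrite /EUdev; under [RHS]eq_bigr do rewrite mulr_sumr.
rewrite exchange_big /=; apply: eq_bigr => s _.
rewrite [RHS](bigD1 (s j)) //= [X in _ + X]big1 ?addr0.
  by rewrite ffunE eqxx mul1r mulrA.
by move=> a ne; rewrite ffunE eq_sym (negbTE ne) !mul0r mulr0.
Qed.

Lemma EU_dev (sg : profile R S) j : EU P sg j = EUdev P sg (sg j).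
Proof. by rewrite /EU /EUdev; apply: eq_bigr => s _; rewrite (bigD1 j). Qed.

Lemma fix_nash y : cube y -> (forall k, fN y k = y k) -> Nash P (sgm y).
Proof.
move=> cy fy.
have A i (a : S i) : yv y a = Fm y a.
  rewrite /yv -fy /fN enum_rankK; by [].
have G0 i : 0 <= \sum_(b : S i) gp y b by apply: sumr_ge0 => b _; exact: gp_ge0.
have B i : sy y i = 1.
  rewrite /sy; under eq_bigr do rewrite A.
  rewrite /Fm -mulr_suml big_split /= sgm_sum divff //.
  by rewrite gt_eqF // den_gt0.
have C i (a : S i) : sgm y i a = yv y a.
  rewrite ffunE /mm B maxxx invr1 !mulr1 subrr mul0r addr0; by [].
have D i (a : S i) : sgm y i a * \sum_(b : S i) gp y b = gp y a.
  have := A i a; rewrite -C /Fm => /(congr1 (fun x => x * (1 + \sum_(b : S i) gp y b))).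
  by rewrite divfK ?gt_eqF ?den_gt0 // mulrDr mulr1 => e; exact: (addrI _ e).
have E i : \sum_(b : S i) gp y b = 0.
  apply/eqP; rewrite eq_le G0 andbT; apply/negP => /negP; rewrite -ltNge => Gp.
  have Z : \sum_(a : S i) sgm y i a * gain y a = 0.
    rewrite /gain; under eq_bigr do rewrite mulrBr.
    rewrite sumrB -EUdev_lin -EU_dev -mulr_suml sgm_sum mul1r subrr; by [].
  have [a0 a0p] : exists a0, 0 < sgm y i a0.
    case: (pickP (fun a => 0 < sgm y i a)) => [a0 h|no]; first by exists a0.
    exfalso.
    have := sgm_sum y i; rewrite big1 => [/esym/eqP|a _]; first by rewrite oner_eq0.
    by apply/eqP; rewrite eq_le sgm_ge0 // andbT leNgt no.
  have pos a : 0 < sgm y i a -> 0 < sgm y i a * gain y a.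
    move=> sp; apply: mulr_gt0 => //.
    have : 0 < gp y a by rewrite -(D i a) mulr_gt0.
    by rewrite /gp lt_max ltxx.
  have : 0 < \sum_(a : S i) sgm y i a * gain y a.
    rewrite (bigD1 a0) //=; apply: ltr_wpDr; last exact: pos.
    apply: sumr_ge0 => a _; have := sgm_ge0 cy a; rewrite le_eqVlt => /orP[/eqP <-|sp].
      by rewrite mul0r.
    exact: ltW (pos a sp).
  by rewrite Z ltxx.
have F i (a : S i) : EUdev P (sgm y) (pure a) <= EU P (sgm y) i.
  have := @psumr_eq0P _ _ _ _ (fun b _ => gp_ge0 y b) (E i) a erefl.
  move=> /eqP; rewrite /gp eq_le ge_max lexx /= => /andP[h _].
  by rewrite -subr_le0.
split.
  by move=> i; split; [exact: sgm_ge0|exact: sgm_sum].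
move=> j tau [t0 t1]; rewrite EUdev_lin.
apply: le_trans (_ : \sum_(a : S j) tau a * EU P (sgm y) j <= _).
  by apply: ler_sum => a _; apply: ler_wpM2l.
by rewrite -mulr_suml t1 mul1r.
Qed.

Theorem nash_exists : exists sg, Nash P sg.
Proof.
have [y [cy fy]] := brouwer_cube fN_cube (fun k => @scont_Fm _ (tagged (enum_val k))).
by exists (sgm y); exact: fix_nash.
Qed.

End Nash.


Section Main.
Variables (R : realType) (n : nat) (S : 'I_n -> finType).
Implicit Types (g h : mgame R S) (M : gset R S).

Lemma ADnS t M : ADn t.+1 M = AD (ADn t M).
Proof. elim: t M => [|t IH] M; first by []. by rewrite -[ADn t.+2 M]/(ADn t.+1 (AD M)) IH. Qed.

Lemma ADnSP t M g : ADn t.+1 M g <-> exists h, ADn t M h /\ edge h g.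
Proof.
rewrite ADnS; split.
  by case=> h [sg [v [Mh N c e]]]; exists h; split => //; exists sg, v.
by case=> h [Mh [sg [v [N c e]]]]; exists h, sg, v.
Qed.

Definition D g := [set v : pos S | [forall i, subj g i v == actual g v]].
Definition cnt g := #|D g|.

Lemma adapt_id g v : v \in D g -> adapt g v = g.
Proof.
rewrite inE => /forallP H; case: g H => a s H; rewrite /adapt /=; congr MGame.
apply/ffunP => i; rewrite ffunE; apply/ffunP => w; rewrite ffunE.
by case: eqP => // ->; apply/esym/eqP; exact: H.
Qed.

Lemma adapt_cnt g v : v \notin D g -> (cnt g < cnt (adapt g v))%N.
Proof.
move=> vD; apply: proper_card; apply/properP; split.
  apply/fintype.subsetP => w; rewrite !inE => /forallP H; apply/forallP => i.
  rewrite /adapt /= ?ffunE; case: (eqVneq w v) => [->|_] //; exact: H.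
exists v => //; rewrite inE; apply/forallP => i; by rewrite /adapt /= ?ffunE eqxx.
Qed.

Lemma edge_cnt g h : edge h g -> g = h \/ (cnt h < cnt g)%N.
Proof.
case=> sg [v [_ _ ->]]; case: (boolP (v \in D h)) => vD.
  by left; exact: adapt_id.
by right; exact: adapt_cnt.
Qed.

Lemma cnt_le g : (cnt g <= #|pos S|)%N.
Proof. exact: max_card. Qed.

Variable g0 : mgame R S.
Local Notation A t := (ADn t (single g0)).

Lemma Ldup t g : A t g -> (cnt g0 + t <= cnt g)%N \/ A t.+1 g.
Proof.
elim: t g => [|t IH] g.
  by move=> /= ->; left; rewrite addn0.
move/ADnSP => [h [Ah e]]; case: (IH h Ah) => [le|Ah'].
  case: (edge_cnt e) => [eg|lt].
    by right; apply/ADnSP; exists g; split; [apply/ADnSP; exists h | move: e; rewrite eg].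
  by left; rewrite addnS; exact: leq_ltn_trans le lt.
by right; apply/ADnSP; exists h.
Qed.

Lemma Lrem t g : A t.+1 g -> (cnt g0 + t.+1 <= cnt g)%N \/ A t g.
Proof.
elim: t g => [|t IH] g.
  move/ADnSP => [h [/= -> e]]; case: (edge_cnt e) => [->|lt]; first by right.
  by left; rewrite addn1.
move/ADnSP => [h [Ah e]]; case: (IH h Ah) => [le|Ah'].
  case: (edge_cnt e) => [eg|lt].
    by right; rewrite eg.
  by left; rewrite addnS; exact: leq_ltn_trans le lt.
by right; apply/ADnSP; exists h.
Qed.

Lemma AD_eq M1 M2 : set_eq M1 M2 -> set_eq (AD M1) (AD M2).
Proof.
move=> E g; split; case=> h [sg [v [Mh N c e]]]; exists h, sg, v; split => //; exact/E.
Qed.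

Lemma stab_from K : (#|pos S| < K)%N -> set_eq (A K.+1) (A K).
Proof.
move=> lt g; split.
  case/Lrem => // le; have := cnt_le g; lia.
case/Ldup => // le; have := cnt_le g; lia.
Qed.

Lemma stab_plus L : set_eq (A L.+1) (A L) -> forall k, set_eq (A (L + k)) (A L).
Proof.
move=> E; elim=> [|k IH]; first by rewrite addn0.
rewrite addnS => g; rewrite ADnS; split.
  by move/(AD_eq IH g); rewrite -ADnS; move/E.
by move/E; rewrite ADnS; move/(AD_eq IH g).
Qed.

Lemma length_ex : exists L, is_length (single g0) L.
Proof.
have Q : set_eq (A #|pos S|.+1.+1) (A #|pos S|.+1) by apply: stab_from.
suff : forall t, set_eq (A t.+1) (A t) -> exists L, is_length (single g0) L by apply.
elim/ltn_ind => t IH Qt.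
case: (pselect (exists2 t', (t' < t)%N & set_eq (A t'.+1) (A t'))) => [[t' lt Qt']|no].
  exact: IH lt Qt'.
by exists t; split => // t' lt Qt'; apply: no; exists t'.
Qed.

Lemma nme_chi g sg : NME g sg -> exists v, chi sg v.
Proof.
move=> N.
have ex i : exists a, 0 < sg i a.
  have [tau [[prof _] e]] := N i; have [nn sm] := prof i; rewrite e in nn sm.
  case: (pickP (fun a => 0 < sg i a)) => [a h|no]; first by exists a.
  exfalso; have : \sum_a sg i a = 0.
    by apply: big1 => a _; apply/eqP; rewrite eq_le nn andbT leNgt no.
  by rewrite sm => /eqP; rewrite oner_eq0.
exists (finfun (fun i => xchoose (ex i))) => i; rewrite ffunE.
exact: (xchooseP (ex i)).
Qed.

Lemma reach_loop t g : A t g -> edge g g -> forall k, A (t + k) g.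
Proof.
move=> Ag e; elim=> [|k IH]; first by rewrite addn0.
by rewrite addnS; apply/ADnSP; exists g.
Qed.

Lemma sink_fix g sg v : sink g0 g -> NME g sg -> chi sg v -> adapt g v = g.
Proof.
move=> [[t At] no] N c; apply: contrapT => ne; apply: no; exists (adapt g v); split => //.
  by exists t.+1; apply/ADnSP; exists g; split => //; exists sg, v.
by exists sg, v.
Qed.

End Main.

Theorem proposition19 (R : realType) (n : nat) (S : 'I_n -> finType)
    (g0 : mgame R S) (HS : forall i, (0 < #|S i|)%N) :
  (forall g, sink g0 g -> terminal g0 g) /\
  (forall g, sink g0 g -> forall sg, NME g sg -> stable g0 sg).
Proof.
split.
  move=> g sk.
  have ex i : exists tau, Nash (subj g i) tau := nash_exists HS (subj g i).
  pose sg : profile R S := fun i => (sval (cid (ex i))) i.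
  have N : NME g sg by move=> i; exists (sval (cid (ex i))); split => //; exact: svalP (cid (ex i)).
  have [v c] := nme_chi N.
  split; first by case: sk.
  by exists g, sg, v; split => //; rewrite (sink_fix sk N c).
move=> g sk sg N.
have [v c] := nme_chi N.
have e : edge g g by exists sg, v; split => //; rewrite (sink_fix sk N c).
have [L [QL minL]] := length_ex g0.
case: (sk) => -[t At] _.
exists g; split => //; last by move=> w cw; exact: sink_fix sk N cw.
exists L; split => //.
have := reach_loop At e L; rewrite addnC => /(stab_plus QL).
by [].
Qed.
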